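(* Let $n_p\ge 1$, let $P\subset\mathbb{R}^{n_p}$ be convex and compact, let $f:\mathbb{R}\times\mathbb{R}^{n_p}\to\mathbb{R}$, let $Q\subset P$ be the (assumed nonempty) set of $\mathbf{p}\in P$ for which $f(z,\mathbf{p})=0$ has at least one solution $z\in\mathbb{R}$, and let $x:Q\to\mathbb{R}$ satisfy $f(x(\mathbf{p}),\mathbf{p})=0$ for all $\mathbf{p}\in Q$. Let $X:=[x^{L},x^{U}]$ be an interval with $x(\mathbf{p})\in X$ for all $\mathbf{p}\in Q$. Suppose $f^{cv}$ and $f^{cc}$ are convex and concave relaxations of $f$ on $X\times P$ which are piecewise affine of the form $$f^{cv}(\xi,\mathbf{p})=\max\{[\mathbf{a}^{cv,i}]^\top\mathbf{p}+\alpha^{cv,i}\xi+b^{cv,i}: i\in\{1,\dots,k\}\},\qquad f^{cc}(\xi,\mathbf{p})=\min\{[\mathbf{a}^{cc,j}]^\top\mathbf{p}+\alpha^{cc,j}\xi+b^{cc,j}: j\in\{1,\dots,\ell\}\},$$ with $\mathbf{a}^{cv,i},\mathbf{a}^{cc,j}\in\mathbb{R}^{n_p}$ and $\alpha^{cv,i},b^{cv,i},\alpha^{cc,j},b^{cc,j}\in\mathbb{R}$. Let $K^-=\{i:\alpha^{cv,i}<0\}$, $K^+=\{i:\alpha^{cv,i}>0\}$, $L^-=\{j:\alpha^{cc,j}<0\}$, $L^+=\{j:\alpha^{cc,j}>0\}$, and for each $i,j$ define $g_i(\mathbf{p}):=\frac{-1}{\alpha^{cv,i}}([\mathbf{a}^{cv,i}]^\top\mathbf{p}+b^{cv,i})$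 and $\gamma_j(\mathbf{p}):=\frac{-1}{\alpha^{cc,j}}([\mathbf{a}^{cc,j}]^\top\mathbf{p}+b^{cc,j})$ (for the indices where the denominators are nonzero). Define $h^{cv},h^{cc}:P\to\mathbb{R}$ by $$h^{cv}(\mathbf{p}):=\max\big(\{g_i(\mathbf{p}):i\in K^-\}\cup\{\gamma_j(\mathbf{p}):j\in L^+\}\big),\qquad h^{cc}(\mathbf{p}):=\min\big(\{g_i(\mathbf{p}):i\in K^+\}\cup\{\gamma_j(\mathbf{p}):j\in L^-\}\big),$$ and define $x^{cv}(\mathbf{p}):=\max\{x^{L},h^{cv}(\mathbf{p})\}$ and $x^{cc}(\mathbf{p}):=\min\{x^{U},h^{cc}(\mathbf{p})\}$. Then for any $\mathbf{p}\in\mathrm{int}(Q)$, a subgradient $\mathbf{s}^{cv}\in\mathbb{R}^{n_p}$ of $x^{cv}$ at $\mathbf{p}$ is given by: $\mathbf{s}^{cv}:=\mathbf{0}$ if $x^{cv}(\mathbf{p})=x^{L}$; otherwise, if $x^{cv}(\mathbf{p})=g_i(\mathbf{p})$ for some $i\in K^-$, then $\mathbf{s}^{cv}:=-\mathbf{a}^{cv,i}/\alpha^{cv,i}$; otherwise there exists $j\in L^+$ with $x^{cv}(\mathbf{p})=\gamma_j(\mathbf{p})$, and $\mathbf{s}^{cv}:=-\mathbf{a}^{cc,j}/\alpha^{cc,j}$. Similarly, a subgradient $\mathbf{s}^{cc}\in\mathbb{R}^{n_p}$ of the concave function $x^{cc}$ at $\mathbf{p}$ is given by: $\mathbf{s}^{cc}:=\mathbf{0}$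 if $x^{cc}(\mathbf{p})=x^{U}$; otherwise, if $x^{cc}(\mathbf{p})=\gamma_j(\mathbf{p})$ for some $j\in L^-$, then $\mathbf{s}^{cc}:=-\mathbf{a}^{cc,j}/\alpha^{cc,j}$; otherwise there exists $i\in K^+$ with $x^{cc}(\mathbf{p})=g_i(\mathbf{p})$, and $\mathbf{s}^{cc}:=-\mathbf{a}^{cv,i}/\alpha^{cv,i}$.
   Context: A convex relaxation of $f$ on $X\times P$ is a convex function $f^{cv}$ on $X\times P$ with $f^{cv}\le f$ there; a concave relaxation is a concave $f^{cc}$ with $f^{cc}\ge f$. The functions $x^{cv}$, $x^{cc}$ are (closed-form expressions of) the implicit function relaxations $x^{cv}(\mathbf{p})=\inf\{\xi\in X: f^{cv}(\xi,\mathbf{p})\le 0\le f^{cc}(\xi,\mathbf{p})\}$ and $x^{cc}(\mathbf{p})=\sup\{\xi\in X: f^{cv}(\xi,\mathbf{p})\le 0\le f^{cc}(\xi,\mathbf{p})\}$. A subgradient of a convex function $\phi$ at $\mathbf{p}$ is $\mathbf{s}$ with $\phi(\boldsymbol{\eta})\ge\phi(\mathbf{p})+\langle\mathbf{s},\boldsymbol{\eta}-\mathbf{p}\rangle$ for all $\boldsymbol{\eta}$ in the domain; for a concave $\phi$ it is $\mathbf{s}$ with $\phi(\boldsymbol{\eta})\le\phi(\mathbf{p})+\langle\mathbf{s},\boldsymbol{\eta}-\mathbf{p}\rangle$. *)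

(* Defs.v *)
From HB Require Import structures.
From mathcomp Require Import all_boot all_order all_algebra.
From mathcomp Require Import all_classical all_reals all_analysis.
Set Implicit Arguments. Unset Strict Implicit. Unset Printing Implicit Defensive.
Import Order.TTheory GRing.Theory Num.Theory.
Import numFieldNormedType.Exports.
Local Open Scope classical_set_scope.
Local Open Scope ring_scope.

Definition dotv {R : realType} {n : nat} (a p : 'rV[R]_n) : R :=
  \sum_(i < n) a ord0 i * p ord0 i.

Definition convex_setv {R : realType} {n : nat} (A : set 'rV[R]_n) : Prop :=
  forall x y (t : R), A x -> A y -> 0 <= t -> t <= 1 -> A (t *: x + (1 - t) *: y).

Definition convex_on2 {R : realType} {n : nat} (X : set R) (P : set 'rV[R]_n)
  (F : R -> 'rV[R]_n -> R) : Prop :=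
  forall z1 z2 p1 p2 (t : R), X z1 -> X z2 -> P p1 -> P p2 -> 0 <= t -> t <= 1 ->
    F (t * z1 + (1 - t) * z2) (t *: p1 + (1 - t) *: p2)
      <= t * F z1 p1 + (1 - t) * F z2 p2.

Definition concave_on2 {R : realType} {n : nat} (X : set R) (P : set 'rV[R]_n)
  (F : R -> 'rV[R]_n -> R) : Prop :=
  convex_on2 X P (fun z p => - F z p).

Definition subgrad_cv {R : realType} {n : nat} (D : set 'rV[R]_n)
  (phi : 'rV[R]_n -> R) (p s : 'rV[R]_n) : Prop :=
  forall eta, D eta -> phi p + dotv s (eta - p) <= phi eta.

Definition subgrad_cc {R : realType} {n : nat} (D : set 'rV[R]_n)
  (phi : 'rV[R]_n -> R) (p s : 'rV[R]_n) : Prop :=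
  forall eta, D eta -> phi eta <= phi p + dotv s (eta - p).

Definition affp {R : realType} {n : nat} (a : 'rV[R]_n) (alpha b xi : R) (p : 'rV[R]_n) : R :=
  dotv a p + alpha * xi + b.

Definition pw_max {R : realType} {n k : nat} (a : 'I_k.+1 -> 'rV[R]_n)
  (alpha b : 'I_k.+1 -> R) (xi : R) (p : 'rV[R]_n) : R :=
  \big[Num.max/affp (a ord0) (alpha ord0) (b ord0) xi p]_(i < k.+1)
     affp (a i) (alpha i) (b i) xi p.

Definition pw_min {R : realType} {n k : nat} (a : 'I_k.+1 -> 'rV[R]_n)
  (alpha b : 'I_k.+1 -> R) (xi : R) (p : 'rV[R]_n) : R :=
  \big[Num.min/affp (a ord0) (alpha ord0) (b ord0) xi p]_(i < k.+1)
     affp (a i) (alpha i) (b i) xi p.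

(* g(p) = -1/alpha * (a^T p + b) : the zero in xi of the affine piece. *)
Definition zero_piece {R : realType} {n : nat} (a : 'rV[R]_n) (alpha b : R)
  (p : 'rV[R]_n) : R :=
  - alpha^-1 * (dotv a p + b).

(* x^cv(p) = max{ xL, h^cv(p) } with
   h^cv(p) = max ({g_i(p) : alpha^cv_i < 0} U {gamma_j(p) : alpha^cc_j > 0})
   (convention: the max of an empty family is -oo, so x^cv = xL then). *)
Definition xcv_fun {R : realType} {n k l : nat}
  (acv : 'I_k.+1 -> 'rV[R]_n) (alcv bcv : 'I_k.+1 -> R)
  (acc : 'I_l.+1 -> 'rV[R]_n) (alcc bcc : 'I_l.+1 -> R) (xL : R)
  (p : 'rV[R]_n) : R :=
  Num.max (\big[Num.max/xL]_(i < k.+1 | alcv i < 0) zero_piece (acv i) (alcv i) (bcv i) p)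
          (\big[Num.max/xL]_(j < l.+1 | 0 < alcc j) zero_piece (acc j) (alcc j) (bcc j) p).

(* x^cc(p) = min{ xU, h^cc(p) } with
   h^cc(p) = min ({g_i(p) : alpha^cv_i > 0} U {gamma_j(p) : alpha^cc_j < 0})
   (convention: the min of an empty family is +oo). *)
Definition xcc_fun {R : realType} {n k l : nat}
  (acv : 'I_k.+1 -> 'rV[R]_n) (alcv bcv : 'I_k.+1 -> R)
  (acc : 'I_l.+1 -> 'rV[R]_n) (alcc bcc : 'I_l.+1 -> R) (xU : R)
  (p : 'rV[R]_n) : R :=
  Num.min (\big[Num.min/xU]_(i < k.+1 | 0 < alcv i) zero_piece (acv i) (alcv i) (bcv i) p)
          (\big[Num.min/xU]_(j < l.+1 | alcc j < 0) zero_piece (acc j) (alcc j) (bcc j) p).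

(* Main.v *)
Require Import Defs.
From HB Require Import structures.
From mathcomp Require Import all_boot all_order all_algebra.
From mathcomp Require Import all_classical all_reals all_analysis.
From mathcomp Require Import ring.
Import Order.TTheory GRing.Theory Num.Theory.
Import numFieldNormedType.Exports.
Local Open Scope classical_set_scope.
Local Open Scope ring_scope.


Lemma bmax_ge0 (R : realType) (I : eqType) (r : seq I) (P : pred I) (F : I -> R) x0 :
  x0 <= \big[Num.max/x0]_(i <- r | P i) F i.
Proof.
elim: r => [|a r IH]; rewrite ?big_nil ?big_cons //; case: ifP => _ //.
by rewrite le_max IH orbT.
Qed.

Lemma bmax_geF (R : realType) (I : eqType) (r : seq I) (P : pred I) (F : I -> R) x0 i0 :
  i0 \in r -> P i0 -> F i0 <= \big[Num.max/x0]_(i <- r | P i) F i.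
Proof.
elim: r => [|a r IH] //; rewrite in_cons big_cons => /orP [/eqP<- Pi|/IH H Pi].
  by rewrite Pi le_max lexx.
case: ifP => _; last exact: H Pi.
by rewrite le_max H // orbT.
Qed.

Lemma bmax_cases (R : realType) (I : eqType) (r : seq I) (P : pred I) (F : I -> R) x0 :
  \big[Num.max/x0]_(i <- r | P i) F i = x0 \/
  exists i, P i /\ \big[Num.max/x0]_(i <- r | P i) F i = F i.
Proof.
apply: (big_ind (fun y => y = x0 \/ exists i, P i /\ y = F i)); first by left.
  move=> a b Ha Hb.
  have [->|->] : Num.max a b = a \/ Num.max a b = b.
    by case: (leP a b) => h; [right | left].
  - exact: Ha.
  - exact: Hb.
by move=> i Pi; right; exists i.
Qed.

Lemma bmin_le0 (R : realType) (I : eqType) (r : seq I) (P : pred I) (F : I -> R) x0 :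
  \big[Num.min/x0]_(i <- r | P i) F i <= x0.
Proof.
elim: r => [|a r IH]; rewrite ?big_nil ?big_cons //; case: ifP => _ //.
by rewrite ge_min IH orbT.
Qed.

Lemma bmin_leF (R : realType) (I : eqType) (r : seq I) (P : pred I) (F : I -> R) x0 i0 :
  i0 \in r -> P i0 -> \big[Num.min/x0]_(i <- r | P i) F i <= F i0.
Proof.
elim: r => [|a r IH] //; rewrite in_cons big_cons => /orP [/eqP<- Pi|/IH H Pi].
  by rewrite Pi ge_min lexx.
case: ifP => _; last exact: H Pi.
by rewrite ge_min H // orbT.
Qed.

Lemma bmin_cases (R : realType) (I : eqType) (r : seq I) (P : pred I) (F : I -> R) x0 :
  \big[Num.min/x0]_(i <- r | P i) F i = x0 \/
  exists i, P i /\ \big[Num.min/x0]_(i <- r | P i) F i = F i.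
Proof.
apply: (big_ind (fun y => y = x0 \/ exists i, P i /\ y = F i)); first by left.
  move=> a b Ha Hb.
  have [->|->] : Num.min a b = a \/ Num.min a b = b.
    by case: (leP a b) => h; [left | right].
  - exact: Ha.
  - exact: Hb.
by move=> i Pi; right; exists i.
Qed.

Lemma dotv0 (R : realType) (n : nat) (v : 'rV[R]_n) : dotv 0 v = 0.
Proof. by rewrite /dotv big1 // => i _; rewrite mxE mul0r. Qed.

Lemma zp_aff (R : realType) (n : nat) (a : 'rV[R]_n) (al b : R) (p eta : 'rV[R]_n) :
  zero_piece a al b p + dotv (- (al^-1 *: a)) (eta - p) = zero_piece a al b eta.
Proof.
rewrite /zero_piece /dotv.
have -> : \sum_(i < n) (- (al^-1 *: a)) ord0 i * (eta - p) ord0 i =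
  - al^-1 * (\sum_(i < n) a ord0 i * eta ord0 i - \sum_(i < n) a ord0 i * p ord0 i).
  rewrite -sumrB mulr_sumr; apply: eq_bigr => i _; rewrite !mxE; ring.
ring.
Qed.

Theorem proposition4p1 (R : realType) (np : nat) (P : set 'rV[R]_np)
  (f : R -> 'rV[R]_np -> R) (x : 'rV[R]_np -> R) (xL xU : R)
  (k l : nat)
  (acv : 'I_k.+1 -> 'rV[R]_np) (alcv bcv : 'I_k.+1 -> R)
  (acc : 'I_l.+1 -> 'rV[R]_np) (alcc bcc : 'I_l.+1 -> R) :
  (1 <= np)%N ->
  convex_setv P -> compact P ->
  let Q := [set p | P p /\ exists z : R, f z p = 0] in
  Q !=set0 ->
  (forall p, Q p -> f (x p) p = 0) ->
  xL <= xU ->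
  let X := [set z : R | xL <= z <= xU] in
  (forall p, Q p -> X (x p)) ->
  let fcv := pw_max acv alcv bcv in
  let fcc := pw_min acc alcc bcc in
  convex_on2 X P fcv -> (forall z p, X z -> P p -> fcv z p <= f z p) ->
  concave_on2 X P fcc -> (forall z p, X z -> P p -> f z p <= fcc z p) ->
  let g i := zero_piece (acv i) (alcv i) (bcv i) in
  let gam j := zero_piece (acc j) (alcc j) (bcc j) in
  let xcv := xcv_fun acv alcv bcv acc alcc bcc xL in
  let xcc := xcc_fun acv alcv bcv acc alcc bcc xU in
  forall p, interior Q p ->
  (* subgradient of x^cv at p *)
  [/\ xcv p = xL -> subgrad_cv P xcv p 0,
      xcv p <> xL -> forall i, alcv i < 0 -> xcv p = g i p ->
        subgrad_cv P xcv p (- ((alcv i)^-1 *: acv i)) &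
      xcv p <> xL -> (forall i, alcv i < 0 -> xcv p <> g i p) ->
        (exists j, 0 < alcc j /\ xcv p = gam j p) /\
        (forall j, 0 < alcc j -> xcv p = gam j p ->
           subgrad_cv P xcv p (- ((alcc j)^-1 *: acc j)))] /\
  (* subgradient of x^cc at p *)
  [/\ xcc p = xU -> subgrad_cc P xcc p 0,
      xcc p <> xU -> forall j, alcc j < 0 -> xcc p = gam j p ->
        subgrad_cc P xcc p (- ((alcc j)^-1 *: acc j)) &
      xcc p <> xU -> (forall j, alcc j < 0 -> xcc p <> gam j p) ->
        (exists i, 0 < alcv i /\ xcc p = g i p) /\
        (forall i, 0 < alcv i -> xcc p = g i p ->
           subgrad_cc P xcc p (- ((alcv i)^-1 *: acv i)))].
Proof.
move=> h1 hP hc Q hQ hx hLU X hX fcv fcc hcv hcvle hcc hccle g gam xcv xcc p hp.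
have cv0 : forall eta, xL <= xcv eta.
  by move=> eta; rewrite /xcv /xcv_fun le_max bmax_ge0.
have cvg : forall eta i, alcv i < 0 -> g i eta <= xcv eta.
  move=> eta i hX0; rewrite /xcv /xcv_fun le_max; apply/orP; left.
  exact: (@bmax_geF _ _ _ _ _ _ _ (mem_index_enum _) hX0).
have cvgam : forall eta j, 0 < alcc j -> gam j eta <= xcv eta.
  move=> eta j hX0; rewrite /xcv /xcv_fun le_max; apply/orP; right.
  exact: (@bmax_geF _ _ _ _ _ _ _ (mem_index_enum _) hX0).
have cc0 : forall eta, xcc eta <= xU.
  by move=> eta; rewrite /xcc /xcc_fun ge_min bmin_le0.
have ccg : forall eta i, 0 < alcv i -> xcc eta <= g i eta.
  move=> eta i hX0; rewrite /xcc /xcc_fun ge_min; apply/orP; left.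
  exact: (@bmin_leF _ _ _ _ _ _ _ (mem_index_enum _) hX0).
have ccgam : forall eta j, alcc j < 0 -> xcc eta <= gam j eta.
  move=> eta j hX0; rewrite /xcc /xcc_fun ge_min; apply/orP; right.
  exact: (@bmin_leF _ _ _ _ _ _ _ (mem_index_enum _) hX0).
split; split.
- by move=> H eta _; rewrite dotv0 addr0 H.
- move=> _ i hi H eta _; rewrite H zp_aff; exact: cvg.
- move=> Hn Hg; split.
    move: Hn Hg; rewrite /xcv /xcv_fun.
    set A := \big[Num.max/xL]_(i < k.+1 | alcv i < 0) _.
    set B := \big[Num.max/xL]_(j < l.+1 | 0 < alcc j) _.
    have [->|->] : Num.max A B = A \/ Num.max A B = B.
      by case: (leP A B) => h; [right | left].
    + move=> Hn Hg; exfalso.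
      case: (@bmax_cases _ _ (index_enum 'I_k.+1) (fun i => alcv i < 0)
        (fun i => zero_piece (acv i) (alcv i) (bcv i) p) xL).
        by move=> E; apply: Hn; rewrite /A E.
      by move=> [i [hi E]]; apply: (Hg i hi); rewrite /A E.
    + move=> Hn Hg.
      case: (@bmax_cases _ _ (index_enum 'I_l.+1) (fun j => 0 < alcc j)
        (fun j => zero_piece (acc j) (alcc j) (bcc j) p) xL).
        by move=> E; exfalso; apply: Hn; rewrite /B E.
      by move=> [j [hj E]]; exists j; split => //; rewrite /B E.
  move=> j hj H eta _; rewrite H zp_aff; exact: cvgam.
- by move=> H eta _; rewrite dotv0 addr0 H.
- move=> _ j hj H eta _; rewrite H zp_aff; exact: ccgam.
- move=> Hn Hg; split.
    move: Hn Hg; rewrite /xcc /xcc_fun.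
    set A := \big[Num.min/xU]_(i < k.+1 | 0 < alcv i) _.
    set B := \big[Num.min/xU]_(j < l.+1 | alcc j < 0) _.
    have [->|->] : Num.min A B = A \/ Num.min A B = B.
      by case: (leP A B) => h; [left | right].
    + move=> Hn Hg.
      case: (@bmin_cases _ _ (index_enum 'I_k.+1) (fun i => 0 < alcv i)
        (fun i => zero_piece (acv i) (alcv i) (bcv i) p) xU).
        by move=> E; exfalso; apply: Hn; rewrite /A E.
      by move=> [i [hi E]]; exists i; split => //; rewrite /A E.
    + move=> Hn Hg; exfalso.
      case: (@bmin_cases _ _ (index_enum 'I_l.+1) (fun j => alcc j < 0)
        (fun j => zero_piece (acc j) (alcc j) (bcc j) p) xU).
        by move=> E; apply: Hn; rewrite /B E.
      by move=> [j [hj E]]; apply: (Hg j hj); rewrite /B E.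
  move=> i hi H eta _; rewrite H zp_aff; exact: ccg.
Qed.
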